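(* Let $\mathcal{F}=\{f_1,\dots,f_M\}$ be a frame of $\mathbb{R}^N$ partitioned into $K$ disjoint pools $\mathcal{F}_k=\{f_j\}_{j\in I_k}$, $k=1,\dots,K$, with $I_k\cap I_{k'}=\emptyset$ for $k\neq k'$, $\bigcup_k I_k=\{1,\dots,M\}$ and $|I_k|=d$ for all $k$. Let $P_2(x)=\big(\|\mathcal{F}_k^T x\|_2\big)_{k=1}^K$ be the $\ell_2$ pooling operator. Then for all $x,x'\in\mathbb{R}^N$, $$A_2\, d(x,x')\le \|P_2(x)-P_2(x')\|_2\le B_2\, d(x,x'),$$ where $d(x,x')=\min(\|x-x'\|,\|x+x'\|)$, $$A_2=\min_{\mathcal{F}'\in\mathcal{Q}_2}\ \min_{\Omega\subset\{1,\dots,M\}}\sqrt{\lambda_-^2(\mathcal{F}'_\Omega)+\lambda_-^2(\mathcal{F}'_{\Omega^c})},\qquad B_2=\lambda_+(\mathcal{F}),$$ and $\mathcal{Q}_2$ is the family of frames $\mathcal{F}'=(U_k\mathcal{F}_k)_{k\le K}$ obtained by choosing, for each $k$, an orthogonal matrix $U_k\in\mathbb{R}^{d\times d}$ ($U_k^TU_k=\mathrm{Id}$) and replacing the $d$ vectors of pool $k$ by the $d$ vectors obtained by applying $U_k$ to them (i.e. the columns of $\mathcal{F}_kU_k^T$, where $\mathcal{F}_k$ is viewed as the $N\times d$ matrix with columns $f_j$, $j\in I_k$), so that each pool is replaced by another frame of the same subspace with the same frame operator.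
   Context: For a finite family of vectors $G=\{g_i\}$ in $\mathbb{R}^N$, $\lambda_-(G)=\inf_{\|x\|=1}\big(\sum_i\langle x,g_i\rangle^2\big)^{1/2}$ and $\lambda_+(G)=\sup_{\|x\|=1}\big(\sum_i\langle x,g_i\rangle^2\big)^{1/2}$ denote its lower and upper frame bounds (in square-root form), with $\lambda_-(\emptyset)=0$. For $\Omega\subset\{1,\dots,M\}$, $\mathcal{F}'_\Omega$ is the subfamily of vectors of $\mathcal{F}'$ indexed by $\Omega$, and $\Omega^c$ is the complement of $\Omega$ in $\{1,\dots,M\}$. *)

(* Defs.v *)
From HB Require Import structures.
From mathcomp Require Import all_boot all_order all_algebra.
From mathcomp Require Import boolp classical_sets reals.
Set Implicit Arguments. Unset Strict Implicit. Unset Printing Implicit Defensive.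
Import Order.TTheory GRing.Theory Num.Theory.
Local Open Scope ring_scope.
Local Open Scope classical_set_scope.

Section Defs.
Variable R : realType.

Definition dotv {N : nat} (x y : 'rV[R]_N) : R := \sum_(i < N) x 0 i * y 0 i.
Definition normv {N : nat} (x : 'rV[R]_N) : R := Num.sqrt (dotv x x).

Definition frame_sum {N M : nat} (G : 'I_M -> 'rV[R]_N) (Om : {set 'I_M})
    (x : 'rV[R]_N) : R :=
  Num.sqrt (\sum_(i in Om) (dotv x (G i)) ^+ 2).

Definition lam_minus {N M : nat} (G : 'I_M -> 'rV[R]_N) (Om : {set 'I_M}) : R :=
  if #|Om| == 0%N then 0
  else inf [set frame_sum G Om x | x in [set x : 'rV[R]_N | normv x = 1]].

Definition lam_plus {N M : nat} (G : 'I_M -> 'rV[R]_N) (Om : {set 'I_M}) : R :=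
  sup [set frame_sum G Om x | x in [set x : 'rV[R]_N | normv x = 1]].

Definition is_frame {N M : nat} (G : 'I_M -> 'rV[R]_N) : Prop :=
  exists A B : R, 0 < A /\ forall x : 'rV[R]_N,
    A * dotv x x <= \sum_(i < M) (dotv x (G i)) ^+ 2 <= B * dotv x x.

Definition pool_enum {M K d : nat} (pool : 'I_M -> 'I_K) (k : 'I_K)
    (e : 'I_d -> 'I_M) : Prop :=
  injective e /\ forall j, pool j = k <-> exists a, e a = j.

(* F' belongs to Q_2: each pool k (as the N x d matrix F_k, columns in the
   order of an enumeration e k) is replaced by the columns of F_k (U_k)^T,
   U_k orthogonal. *)
Definition in_Q2 {N M K d : nat} (pool : 'I_M -> 'I_K)
    (F F' : 'I_M -> 'rV[R]_N) : Prop :=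
  exists (e : 'I_K -> 'I_d -> 'I_M) (U : 'I_K -> 'M[R]_d),
    (forall k, pool_enum pool k (e k)) /\
    (forall k, (U k)^T *m U k = 1%:M) /\
    (forall k a, F' (e k a) = \sum_(b < d) U k a b *: F (e k b)).

Definition P2 {N M K : nat} (pool : 'I_M -> 'I_K) (F : 'I_M -> 'rV[R]_N)
    (x : 'rV[R]_N) : 'rV[R]_K :=
  \row_(k < K) Num.sqrt (\sum_(j < M | pool j == k) (dotv x (F j)) ^+ 2).

Definition dist_pm {N : nat} (x x' : 'rV[R]_N) : R :=
  Num.min (normv (x - x')) (normv (x + x')).

Definition A2 {N M K : nat} (d : nat) (pool : 'I_M -> 'I_K)
    (F : 'I_M -> 'rV[R]_N) : R :=
  inf [set y : R | exists (F' : 'I_M -> 'rV[R]_N) (Om : {set 'I_M}),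
      @in_Q2 N M K d pool F F' /\
      y = Num.sqrt ((lam_minus F' Om) ^+ 2 + (lam_minus F' (~: Om)) ^+ 2)].
End Defs.

(* Main.v *)
Require Import Defs.
From HB Require Import structures.
From mathcomp Require Import all_boot all_order all_algebra.
From mathcomp Require Import boolp classical_sets reals.
From mathcomp Require Import ring lra.
Import Order.TTheory GRing.Theory Num.Theory.
Local Open Scope ring_scope.



Section Alg.
Variable R : realType.

Definition sumsq {n} (a : 'cV[R]_n) : R := \sum_i a i 0 ^+ 2.

Lemma sumsq_ge0 n (a : 'cV[R]_n) : 0 <= sumsq a.
Proof. by apply: sumr_ge0 => i _; rewrite sqr_ge0. Qed.

Lemma sumsq_mx n (a : 'cV[R]_n) : sumsq a = (a^T *m a) 0 0.
Proof. by rewrite mxE; apply: eq_bigr => i _; rewrite !mxE expr2. Qed.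

Lemma sumsq_orth n (U : 'M[R]_n) a : U^T *m U = 1%:M -> sumsq (U *m a) = sumsq a.
Proof.
move=> hU; rewrite !sumsq_mx trmx_mul -mulmxA (mulmxA U^T) hU mul1mx //.
Qed.

Definition hh {n} (h : 'cV[R]_n) : 'M[R]_n :=
  1%:M - (2 / sumsq h) *: (h *m h^T).

Lemma hh_sym n (h : 'cV[R]_n) : (hh h)^T = hh h.
Proof.
apply/matrixP => i j; rewrite !mxE !big_ord1 !mxE eq_sym; ring.
Qed.

Lemma hh_orth n (h : 'cV[R]_n) : (hh h)^T *m hh h = 1%:M.
Proof.
rewrite hh_sym /hh.
set c := 2 / sumsq h; set P := h *m h^T.
have PP : P *m P = sumsq h *: P.
  by rewrite /P mulmxA -(mulmxA h) [h^T *m h]mx11_scalar -sumsq_mx mul_mx_scalar -scalemxAl.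
have cc : c * c * sumsq h = c + c.
  rewrite /c; have [->|s0] := eqVneq (sumsq h) 0; first by rewrite invr0 !mulr0 addr0.
  by field.
rewrite mulmxBl mul1mx mulmxBr mulmx1 -scalemxAl -scalemxAr PP !scalerA cc scalerDl.
by rewrite opprB addrA addrA subrK addrK.
Qed.


Lemma hh_apply n (h w : 'cV[R]_n) i :
  (hh h *m w) i 0 = w i 0 - 2 / sumsq h * h i 0 * \sum_j h j 0 * w j 0.
Proof.
rewrite /hh mulmxBl mul1mx -scalemxAl -mulmxA !mxE big_ord1 !mxE mulrA.
congr (_ - _ * _); apply: eq_bigr => j _; rewrite !mxE //.
Qed.

Lemma sumsq0 n (h : 'cV[R]_n) : sumsq h = 0 -> forall i, h i 0 = 0.
Proof.
move=> /psumr_eq0P H i; apply/eqP; rewrite -sqrf_eq0; apply/eqP/H => // j _.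
exact: sqr_ge0.
Qed.

Lemma pool_rot d (a b : 'cV[R]_d) : exists U : 'M[R]_d, U^T *m U = 1%:M /\
  forall i, (Num.sqrt (sumsq b) * (U *m a) i 0) ^+ 2 =
            (Num.sqrt (sumsq a) * (U *m b) i 0) ^+ 2.
Proof.
case: d a b => [|d] a b; first by exists 1%:M; split; [rewrite trmx1 mulmx1|case].
set A := Num.sqrt (sumsq a); set B := Num.sqrt (sumsq b).
set w := B *: a - A *: b; set nw := Num.sqrt (sumsq w).
pose h : 'cV[R]_d.+1 := \col_i (if i == ord0 then w i 0 - nw else w i 0).
exists (hh h); split; first exact: hh_orth.
have L j : (lift ord0 j == ord0 :> 'I_d.+1) = false by [].
set t := \sum_j h j 0 * w j 0.
have Hw : sumsq w = nw ^+ 2 by rewrite sqr_sqrtr // sumsq_ge0.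
have h0 : h ord0 0 = w ord0 0 - nw by rewrite mxE eqxx.
have hl j : h (lift ord0 j) 0 = w (lift ord0 j) 0 by rewrite mxE L.
set S := \sum_(j < d) w (lift ord0 j) 0 ^+ 2.
have HS : S = nw ^+ 2 - w ord0 0 ^+ 2 by rewrite -Hw /sumsq big_ord_recl addrAC subrr add0r.
have Ht : sumsq h = 2 * t.
  have -> : sumsq h = (w ord0 0 - nw) ^+ 2 + S.
    rewrite /sumsq big_ord_recl h0; congr (_ + _); apply: eq_bigr => j _; by rewrite hl.
  have -> : t = (w ord0 0 - nw) * w ord0 0 + S.
    rewrite /t big_ord_recl h0; congr (_ + _); apply: eq_bigr => j _; by rewrite hl expr2.
  rewrite HS; ring.
have C1 i : i != ord0 -> (hh h *m w) i 0 = 0.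
  move=> i0; rewrite hh_apply -/t.
  have hi : h i 0 = w i 0 by rewrite mxE (negbTE i0).
  have [t0|t0] := eqVneq t 0.
    have hz : h i 0 = 0 by apply: (sumsq0 _ h); rewrite Ht t0 mulr0.
    by rewrite -hi hz mulr0 mul0r subr0.
  by rewrite Ht hi; field.
have C2 : hh h *m w = B *: (hh h *m a) - A *: (hh h *m b).
  by rewrite /w mulmxBr -!scalemxAr.
have C3 i : i != ord0 -> B * (hh h *m a) i 0 = A * (hh h *m b) i 0.
  move=> /C1; rewrite C2 !mxE => /eqP; rewrite subr_eq0 => /eqP //.
have Sa : \sum_i (B * (hh h *m a) i 0) ^+ 2 = B ^+ 2 * A ^+ 2.
  under eq_bigr do rewrite exprMn.
  rewrite -mulr_sumr -/(sumsq _) sumsq_orth ?hh_orth //.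
  by rewrite /A sqr_sqrtr // sumsq_ge0.
have Sb : \sum_i (A * (hh h *m b) i 0) ^+ 2 = B ^+ 2 * A ^+ 2.
  under eq_bigr do rewrite exprMn.
  rewrite -mulr_sumr -/(sumsq _) sumsq_orth ?hh_orth //.
  by rewrite /B sqr_sqrtr ?sumsq_ge0 // mulrC.
move=> i; have [->|/C3 -> //] := eqVneq i ord0.
move: Sa; rewrite -Sb.
rewrite [X in X = _ -> _](bigD1 (ord0 : 'I_d.+1)) // [X in _ = X -> _](bigD1 (ord0 : 'I_d.+1)) //=.
rewrite [X in _ + X = _ -> _](eq_bigr (fun i => (A * (hh h *m b) i 0) ^+ 2)) => [/addIr //|j /C3 -> //].
Qed.

End Alg.
Arguments sumsq {R n} a.
Arguments hh {R n} h.


Section Sums.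
Variable R : realType.
Variable I : finType.
Implicit Types (P : pred I) (x y : I -> R).

Lemma sum_sqrB P x y : \sum_(i | P i) (x i - y i) ^+ 2 =
  \sum_(i | P i) x i ^+ 2 + \sum_(i | P i) y i ^+ 2 - 2 * \sum_(i | P i) x i * y i.
Proof.
rewrite mulr_sumr -big_split -sumrB; apply: eq_bigr => i _ /=; rewrite sqrrB mulr_natl mulr2n; ring.
Qed.

Lemma sumsq_eq0 P x : \sum_(i | P i) x i ^+ 2 = 0 -> forall i, P i -> x i = 0.
Proof.
move=> /psumr_eq0P H i Pi; apply/eqP; rewrite -sqrf_eq0; apply/eqP/H => // j _.
exact: sqr_ge0.
Qed.

Lemma sumsqI_ge0 P x : 0 <= \sum_(i | P i) x i ^+ 2.
Proof. by apply: sumr_ge0 => i _; rewrite sqr_ge0. Qed.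

Lemma sumsqZ P c x : \sum_(i | P i) (c * x i) ^+ 2 = c ^+ 2 * \sum_(i | P i) x i ^+ 2.
Proof. by rewrite mulr_sumr; apply: eq_bigr => i _; rewrite exprMn. Qed.

Lemma cs P x y : \sum_(i | P i) x i * y i <=
  Num.sqrt (\sum_(i | P i) x i ^+ 2) * Num.sqrt (\sum_(i | P i) y i ^+ 2).
Proof.
set A := Num.sqrt _; set B := Num.sqrt _.
have A2 : A ^+ 2 = \sum_(i | P i) x i ^+ 2 by rewrite sqr_sqrtr // sumsqI_ge0.
have B2 : B ^+ 2 = \sum_(i | P i) y i ^+ 2 by rewrite sqr_sqrtr // sumsqI_ge0.
have [A0|A0] := eqVneq A 0.
  have X0 : forall i, P i -> x i = 0.
    by apply: sumsq_eq0; rewrite -A2 A0 expr0n.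
  rewrite big1 ?A0 ?mul0r // => i Pi; by rewrite X0 ?mul0r.
have [B0|B0] := eqVneq B 0.
  have Y0 : forall i, P i -> y i = 0.
    by apply: sumsq_eq0; rewrite -B2 B0 expr0n.
  rewrite big1 ?B0 ?mulr0 // => i Pi; by rewrite Y0 ?mulr0.
have Ap : 0 < A by rewrite lt_def A0 sqrtr_ge0.
have Bp : 0 < B by rewrite lt_def B0 sqrtr_ge0.
have := sumsqI_ge0 P (fun i => B * x i - A * y i).
rewrite sum_sqrB !sumsqZ -A2 -B2.
have -> : \sum_(i | P i) B * x i * (A * y i) = A * B * \sum_(i | P i) x i * y i.
  by rewrite mulr_sumr; apply: eq_bigr => i _; ring.
set S := \sum_(i | P i) _ => H.
have p0 : 0 < A * B by rewrite mulr_gt0.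
nra.
Qed.

Lemma rev_tri P x y :
  (Num.sqrt (\sum_(i | P i) x i ^+ 2) - Num.sqrt (\sum_(i | P i) y i ^+ 2)) ^+ 2
  <= \sum_(i | P i) (x i - y i) ^+ 2.
Proof.
rewrite sum_sqrB sqrrB !sqr_sqrtr ?sumsqI_ge0 //.
have := cs P x y; set A := Num.sqrt _; set B := Num.sqrt _; set S := \sum_(i | P i) _ * _.
move=> H; lra.
Qed.

End Sums.

Section CS2.
Variable R : realType.
Variable I : finType.
Lemma cs_sq (P : pred I) (x y : I -> R) : (\sum_(i | P i) x i * y i) ^+ 2 <=
  (\sum_(i | P i) x i ^+ 2) * (\sum_(i | P i) y i ^+ 2).
Proof.
have h1 := cs _ _ P x y.
have h2 := cs _ _ P (fun i => - x i) y.
have e1 : \sum_(i | P i) (- x i) ^+ 2 = \sum_(i | P i) x i ^+ 2.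
  by apply: eq_bigr => i _; rewrite sqrrN.
have e2 : \sum_(i | P i) - x i * y i = - \sum_(i | P i) x i * y i.
  by rewrite -sumrN; apply: eq_bigr => i _; rewrite mulNr.
rewrite e1 e2 in h2.
rewrite -[X in _ <= X * _](@sqr_sqrtr _ (\sum_(i | P i) x i ^+ 2)) ?sumsqI_ge0 //.
rewrite -[X in _ <= _ * X](@sqr_sqrtr _ (\sum_(i | P i) y i ^+ 2)) ?sumsqI_ge0 //.
move: h1 h2; set A := Num.sqrt _; set B := Num.sqrt _; set S := \sum_(i | P i) _.
have A0 : 0 <= A := sqrtr_ge0 _.
have B0 : 0 <= B := sqrtr_ge0 _.
move=> h1 h2; rewrite -exprMn.
have p0 : 0 <= A * B by rewrite mulr_ge0.
nra.
Qed.
End CS2.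


Section Frame.
Local Open Scope classical_set_scope.
Variable R : realType.
Variable N : nat.
Implicit Types x y z f : 'rV[R]_N.

Lemma dotvDl x y f : dotv (x + y) f = dotv x f + dotv y f.
Proof. by rewrite /dotv -big_split; apply: eq_bigr => i _; rewrite mxE mulrDl. Qed.
Lemma dotvNl x f : dotv (- x) f = - dotv x f.
Proof. by rewrite /dotv -sumrN; apply: eq_bigr => i _; rewrite mxE mulNr. Qed.
Lemma dotvBl x y f : dotv (x - y) f = dotv x f - dotv y f.
Proof. by rewrite dotvDl dotvNl. Qed.
Lemma dotvZl c x f : dotv (c *: x) f = c * dotv x f.
Proof. by rewrite /dotv mulr_sumr; apply: eq_bigr => i _; rewrite mxE mulrA. Qed.
Lemma dotv_sumr d x (c : 'I_d -> R) (g : 'I_d -> 'rV[R]_N) :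
  dotv x (\sum_b c b *: g b) = \sum_b c b * dotv x (g b).
Proof.
rewrite /dotv; under eq_bigr do rewrite summxE mulr_sumr.
rewrite exchange_big; apply: eq_bigr => b _; rewrite mulr_sumr.
by apply: eq_bigr => i _; rewrite mxE; ring.
Qed.
Lemma dotv_sq x : dotv x x = \sum_i x 0 i ^+ 2.
Proof. by apply: eq_bigr => i _; rewrite expr2. Qed.
Lemma dotvxx_ge0 x : 0 <= dotv x x.
Proof. by rewrite dotv_sq sumsqI_ge0. Qed.
Lemma normv_ge0 x : 0 <= normv x.
Proof. exact: sqrtr_ge0. Qed.
Lemma normv_sq x : normv x ^+ 2 = dotv x x.
Proof. by rewrite sqr_sqrtr // dotvxx_ge0. Qed.
Lemma dotvC x y : dotv x y = dotv y x.
Proof. by apply: eq_bigr => i _; rewrite mulrC. Qed.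
Lemma normvZ c x : normv (c *: x) = `|c| * normv x.
Proof.
rewrite /normv dotvZl dotvC dotvZl mulrA -expr2 sqrtrM ?sqr_ge0 //.
by rewrite sqrtr_sqr.
Qed.
Lemma normv0_dot x f : normv x = 0 -> dotv x f = 0.
Proof.
move=> /eqP; rewrite sqrtr_eq0 le_eqVlt ltNge dotvxx_ge0 orbF dotv_sq => /eqP H.
rewrite /dotv big1 // => i _; by rewrite (sumsq_eq0 _ _ _ _ H) ?mul0r.
Qed.

Variable M : nat.
Implicit Types (G : 'I_M -> 'rV[R]_N) (Om : {set 'I_M}).

Lemma frame_sum_ge0 G Om z : 0 <= frame_sum G Om z.
Proof. exact: sqrtr_ge0. Qed.
Lemma frame_sum_sq G Om z : frame_sum G Om z ^+ 2 = \sum_(i in Om) dotv z (G i) ^+ 2.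
Proof. by rewrite sqr_sqrtr // sumsqI_ge0. Qed.
Lemma frame_sumZ G Om c z : frame_sum G Om (c *: z) = `|c| * frame_sum G Om z.
Proof.
rewrite /frame_sum.
under eq_bigr do rewrite dotvZl.
by rewrite sumsqZ sqrtrM ?sqr_ge0 // sqrtr_sqr.
Qed.
Lemma frame_sum0 G Om z : normv z = 0 -> frame_sum G Om z = 0.
Proof.
move=> z0; rewrite /frame_sum big1 ?sqrtr0 // => i _.
by rewrite normv0_dot // expr0n.
Qed.

Lemma normalize z : normv z != 0 -> normv ((normv z)^-1 *: z) = 1.
Proof.
move=> nz; rewrite normvZ ger0_norm ?invr_ge0 ?normv_ge0 // mulVf //.
Qed.

Lemma frame_upper G Om z : frame_sum G Om z <= lam_plus G Om * normv z.
Proof.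
set E := [set frame_sum G Om x | x in [set x : 'rV[R]_N | normv x = 1]].
have ubE : has_ubound E.
  exists (Num.sqrt (\sum_(i in Om) dotv (G i) (G i))) => _ [y /= y1 <-].
  rewrite /frame_sum ler_sqrt; last by apply: sumr_ge0 => i _; exact: dotvxx_ge0.
  apply: ler_sum => i _; have := cs_sq _ _ predT (fun j => y 0 j) (fun j => G i 0 j).
  rewrite -!dotv_sq -normv_sq y1 expr1n mul1r //.
have [z0|nz] := eqVneq (normv z) 0; first by rewrite frame_sum0 // z0 mulr0.
have np : 0 < normv z by rewrite lt_def nz normv_ge0.
have Ey : E (frame_sum G Om ((normv z)^-1 *: z)).
  by exists ((normv z)^-1 *: z) => //=; rewrite normalize.
have := ub_le_sup ubE Ey.
rewrite frame_sumZ ger0_norm ?invr_ge0 ?normv_ge0 // -/(lam_plus G Om).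
by rewrite mulrC ler_pdivrMr.
Qed.

Lemma lam_minus_ge0 G Om : 0 <= lam_minus G Om.
Proof.
rewrite /lam_minus; case: ifP => // _.
set E := [set frame_sum G Om x | x in _].
have [[e Ee]|ne] := pselect (exists e, E e).
  by apply: lb_le_inf; [exists e | move=> _ [y _ <-]; exact: frame_sum_ge0].
rewrite inf_out // => -[[e Ee] _]; apply: ne; by exists e.
Qed.

Lemma frame_lower G Om z : lam_minus G Om * normv z <= frame_sum G Om z.
Proof.
have [z0|nz] := eqVneq (normv z) 0; first by rewrite z0 mulr0 frame_sum_ge0.
have np : 0 < normv z by rewrite lt_def nz normv_ge0.
rewrite /lam_minus; case: ifP => _; first by rewrite mul0r frame_sum_ge0.
set E := [set frame_sum G Om x | x in _].
have lbE : has_lbound E by exists 0 => _ [y _ <-]; exact: frame_sum_ge0.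
have Ey : E (frame_sum G Om ((normv z)^-1 *: z)).
  by exists ((normv z)^-1 *: z) => //=; rewrite normalize.
have := ge_inf lbE Ey.
rewrite frame_sumZ ger0_norm ?invr_ge0 ?normv_ge0 //.
by rewrite mulrC ler_pdivlMr.
Qed.

End Frame.


Lemma pool_ineq (R : realType) d (a b : 'cV[R]_d) (U : 'M[R]_d) :
  U^T *m U = 1%:M ->
  (forall i, (Num.sqrt (sumsq b) * (U *m a) i 0) ^+ 2 =
             (Num.sqrt (sumsq a) * (U *m b) i 0) ^+ 2) ->
  \sum_i (`|(U *m a) i 0| - `|(U *m b) i 0|) ^+ 2 <=
  (Num.sqrt (sumsq a) - Num.sqrt (sumsq b)) ^+ 2 :> R.
Proof.
move=> hU hi.
set A := Num.sqrt (sumsq a); set B := Num.sqrt (sumsq b).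
have A0 : 0 <= A := sqrtr_ge0 _.
have B0 : 0 <= B := sqrtr_ge0 _.
have Su : \sum_i (U *m a) i 0 ^+ 2 = A ^+ 2.
  by rewrite -/(sumsq _) sumsq_orth // sqr_sqrtr // sumsq_ge0.
have Sv : \sum_i (U *m b) i 0 ^+ 2 = B ^+ 2.
  by rewrite -/(sumsq _) sumsq_orth // sqr_sqrtr // sumsq_ge0.
set S := \sum_i `|(U *m a) i 0| * `|(U *m b) i 0|.
have S0 : 0 <= S by apply: sumr_ge0 => i _; rewrite mulr_ge0.
have key : A * B * S = B ^+ 2 * A ^+ 2.
  rewrite mulr_sumr -Su mulr_sumr; apply: eq_bigr => i _.
  have e : `|A * (U *m b) i 0| = `|B * (U *m a) i 0|.
    by rewrite -!sqrtr_sqr hi.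
  have -> : A * B * (`|(U *m a) i 0| * `|(U *m b) i 0|) =
     `|B * (U *m a) i 0| * `|A * (U *m b) i 0|.
    rewrite !normrM (ger0_norm A0) (ger0_norm B0); ring.
  by rewrite e -expr2 real_normK ?num_real // exprMn.
rewrite sum_sqrB.
have -> : \sum_i `|(U *m a) i 0| ^+ 2 = A ^+ 2.
  by rewrite -Su; apply: eq_bigr => i _; rewrite real_normK ?num_real.
have -> : \sum_i `|(U *m b) i 0| ^+ 2 = B ^+ 2.
  by rewrite -Sv; apply: eq_bigr => i _; rewrite real_normK ?num_real.
rewrite -/S.
have AB0 : 0 <= A * B by rewrite mulr_ge0.
nra.
Qed.




Lemma pool_sum (R : realType) M K d (pool : 'I_M -> 'I_K) k (e : 'I_d -> 'I_M)
  (g : 'I_M -> R) : pool_enum pool k e ->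
  \sum_(j < M | pool j == k) g j = \sum_b g (e b).
Proof.
move=> [einj he].
have E : [set j | pool j == k] = [set e b | b : 'I_d] :> {set 'I_M}.
  apply/setP => j; rewrite inE; apply/eqP/imsetP => [/he [b <-]|[b _ ->]].
    by exists b.
  by apply/he; exists b.
rewrite (eq_bigl (fun j => j \in [set j | pool j == k])); last by move=> j; rewrite inE.
rewrite E big_imset; last by move=> ? ? _ _; apply: einj.
by apply: eq_bigl => b.
Qed.

Lemma part_sum (R : realType) M K (pool : 'I_M -> 'I_K) (g : 'I_M -> R) :
  \sum_(j < M) g j = \sum_(k < K) \sum_(j < M | pool j == k) g j.
Proof. by rewrite (partition_big pool predT). Qed.

Theorem proposition3 (R : realType) (N M K d : nat)
    (F : 'I_M -> 'rV[R]_N) (pool : 'I_M -> 'I_K)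
    (hframe : is_frame F)
    (hpool : forall k : 'I_K, #|[set j | pool j == k]| = d) :
  forall x x' : 'rV[R]_N,
    A2 d pool F * dist_pm x x' <= normv (P2 pool F x - P2 pool F x') /\
    normv (P2 pool F x - P2 pool F x') <= lam_plus F [set: 'I_M] * dist_pm x x'.
Proof.
move=> x x'.
pose S := fun (y : 'rV[R]_N) (k : 'I_K) => \sum_(j < M | pool j == k) dotv y (F j) ^+ 2.
have Pn : normv (P2 pool F x - P2 pool F x') =
    Num.sqrt (\sum_k (Num.sqrt (S x k) - Num.sqrt (S x' k)) ^+ 2).
  by rewrite /normv dotv_sq; congr Num.sqrt; apply: eq_bigr => k _; rewrite !mxE.
have dist0 : 0 <= dist_pm x x' by rewrite /dist_pm le_min !normv_ge0.
have Q0 : 0 <= \sum_k (Num.sqrt (S x k) - Num.sqrt (S x' k)) ^+ 2.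
  by apply: sumr_ge0 => k _; rewrite sqr_ge0.
split.
  have He k : exists e : 'I_d -> 'I_M, pool_enum pool k e.
    have Hc := hpool k.
    exists (fun b => enum_val (cast_ord (esym Hc) b)); split.
      by move=> b1 b2 /enum_val_inj /cast_ord_inj.
    move=> j; split.
      move=> pj; have Hj : j \in [set j | pool j == k] by rewrite inE pj.
      exists (cast_ord Hc (enum_rank_in Hj j)).
      by rewrite cast_ordK enum_rankK_in.
    move=> [b <-]; have := enum_valP (cast_ord (esym Hc) b).
    by rewrite inE => /eqP.
  case: (choice He) => e He'.
  pose al k : 'cV[R]_d := \col_(b < d) dotv x (F (e k b)).
  pose be k : 'cV[R]_d := \col_(b < d) dotv x' (F (e k b)).
  have HU k := pool_rot _ _ (al k) (be k).
  case: (choice HU) => U HU'.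
  have Hr j : exists a, e (pool j) a = j by apply/(He' (pool j)).2.
  case: (choice Hr) => r Hr'.
  have pe k a : pool (e k a) = k by apply/(He' k).2; exists a.
  have re k a : r (e k a) = a.
    by apply: (He' k).1; have := Hr' (e k a); rewrite pe.
  pose F' j := \sum_b U (pool j) (r j) b *: F (e (pool j) b).
  have F'e k a : F' (e k a) = \sum_b U k a b *: F (e k b) by rewrite /F' pe re.
  have Q2 : @in_Q2 _ N M K d pool F F'.
    exists e, U; split; first by move=> k; exact: He'.
    by split => [k|k a]; [case: (HU' k) | exact: F'e].
  pose u j := dotv x (F' j); pose v j := dotv x' (F' j).
  have Ua k a : (U k *m al k) a 0 = u (e k a).
    rewrite /u F'e dotv_sumr mxE; apply: eq_bigr => b _; by rewrite mxE.
  have Ub k a : (U k *m be k) a 0 = v (e k a).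
    rewrite /v F'e dotv_sumr mxE; apply: eq_bigr => b _; by rewrite mxE.
  have Sal k : S x k = sumsq (al k).
    rewrite /S (pool_sum _ _ _ _ _ _ _ _ (He' k)) /sumsq; apply: eq_bigr => b _; by rewrite mxE.
  have Sbe k : S x' k = sumsq (be k).
    rewrite /S (pool_sum _ _ _ _ _ _ _ _ (He' k)) /sumsq; apply: eq_bigr => b _; by rewrite mxE.
  pose Om : {set 'I_M} := [set j | 0 <= u j * v j].
  have gid j : (`|u j| - `|v j|) ^+ 2 =
      if j \in Om then dotv (x - x') (F' j) ^+ 2 else dotv (x + x') (F' j) ^+ 2.
    rewrite inE /u /v dotvBl dotvDl.
    transitivity (dotv x (F' j) ^+ 2 + dotv x' (F' j) ^+ 2 -
                  2 * (`|dotv x (F' j)| * `|dotv x' (F' j)|)).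
      rewrite -(real_normK (num_real (dotv x (F' j)))) -(real_normK (num_real (dotv x' (F' j)))).
      ring.
    rewrite -normrM; case: ifP => h; [rewrite ger0_norm // | rewrite ltr0_norm ?ltNge ?h //]; ring.
  have low1 : \sum_k \sum_a (`|u (e k a)| - `|v (e k a)|) ^+ 2 <=
              \sum_k (Num.sqrt (S x k) - Num.sqrt (S x' k)) ^+ 2.
    apply: ler_sum => k _; rewrite Sal Sbe.
    suff -> : \sum_a (`|u (e k a)| - `|v (e k a)|) ^+ 2 =
        \sum_i (`|(U k *m al k) i 0| - `|(U k *m be k) i 0|) ^+ 2.
      by case: (HU' k) => h1 h2; exact: pool_ineq.
    by apply: eq_bigr => a _; rewrite Ua Ub.
  have eqsum : \sum_k \sum_a (`|u (e k a)| - `|v (e k a)|) ^+ 2 =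
               \sum_j (`|u j| - `|v j|) ^+ 2.
    rewrite (part_sum _ _ _ pool); apply: eq_bigr => k _.
    by rewrite (pool_sum _ _ _ _ _ _ _ _ (He' k)).
  have spl : \sum_j (`|u j| - `|v j|) ^+ 2 =
      frame_sum F' Om (x - x') ^+ 2 + frame_sum F' (~: Om) (x + x') ^+ 2.
    rewrite !frame_sum_sq (bigID (fun j => j \in Om)) /=; congr (_ + _).
      by apply: eq_big => [j //|j Hj]; rewrite gid Hj.
    apply: eq_big => [j|j Hj]; first by rewrite !inE.
    by rewrite gid (negbTE Hj).
  have l1 := frame_lower _ _ _ F' Om (x - x').
  have l2 := frame_lower _ _ _ F' (~: Om) (x + x').
  have m1 : dist_pm x x' <= normv (x - x') by rewrite /dist_pm ge_min lexx.
  have m2 : dist_pm x x' <= normv (x + x') by rewrite /dist_pm ge_min lexx orbT.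
  have L10 := lam_minus_ge0 _ _ _ F' Om.
  have L20 := lam_minus_ge0 _ _ _ F' (~: Om).
  have f10 := frame_sum_ge0 _ _ _ F' Om (x - x').
  have f20 := frame_sum_ge0 _ _ _ F' (~: Om) (x + x').
  move: l1 l2 m1 m2 L10 L20 f10 f20.
  set L1 := lam_minus F' Om; set L2 := lam_minus F' (~: Om).
  set f1 := frame_sum F' Om (x - x'); set f2 := frame_sum F' (~: Om) (x + x').
  set n1 := normv (x - x'); set n2 := normv (x + x'); set dd := dist_pm x x'.
  move=> l1 l2 m1 m2 L10 L20 f10 f20.
  have a1 : L1 * dd <= f1 by apply: le_trans l1; rewrite ler_wpM2l.
  have a2 : L2 * dd <= f2 by apply: le_trans l2; rewrite ler_wpM2l.
  have Qge : (L1 ^+ 2 + L2 ^+ 2) * dd ^+ 2 <=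
             \sum_k (Num.sqrt (S x k) - Num.sqrt (S x' k)) ^+ 2.
    apply: le_trans low1; rewrite eqsum spl.
    have b1 : 0 <= L1 * dd by rewrite mulr_ge0.
    have b2 : 0 <= L2 * dd by rewrite mulr_ge0.
    have c1 : (L1 * dd) ^+ 2 <= f1 ^+ 2 by rewrite ler_pXn2r // nnegrE.
    have c2 : (L2 * dd) ^+ 2 <= f2 ^+ 2 by rewrite ler_pXn2r // nnegrE.
    by rewrite mulrDl -!exprMn lerD.
  have hA : A2 d pool F <= Num.sqrt (L1 ^+ 2 + L2 ^+ 2).
    apply: ge_inf; first by exists 0 => _ [F'' [Om' [_ ->]]]; exact: sqrtr_ge0.
    by exists F', Om.
  rewrite Pn; apply: le_trans (ler_wpM2r dist0 hA) _.
  rewrite -(ger0_norm dist0) -sqrtr_sqr -sqrtrM ?addr_ge0 ?sqr_ge0 // ler_sqrt //.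
have tot z : \sum_k S z k = frame_sum F [set: 'I_M] z ^+ 2.
  rewrite frame_sum_sq -(part_sum _ _ _ pool); apply: eq_bigl => j; by rewrite inE.
have up z : (forall k, (Num.sqrt (S x k) - Num.sqrt (S x' k)) ^+ 2 <= S z k) ->
    normv (P2 pool F x - P2 pool F x') <= lam_plus F [set: 'I_M] * normv z.
  move=> hz; rewrite Pn; apply: le_trans (frame_upper _ _ _ F _ z).
  rewrite -(ger0_norm (frame_sum_ge0 _ _ _ F [set: 'I_M] z)) -sqrtr_sqr ler_sqrt ?sqr_ge0 //.
  by rewrite -tot; apply: ler_sum => k _.
have hminus k : (Num.sqrt (S x k) - Num.sqrt (S x' k)) ^+ 2 <= S (x - x') k.
  have -> : S (x - x') k = \sum_(j < M | pool j == k) (dotv x (F j) - dotv x' (F j)) ^+ 2.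
    by apply: eq_bigr => j _; rewrite dotvBl.
  exact: rev_tri.
have hplus k : (Num.sqrt (S x k) - Num.sqrt (S x' k)) ^+ 2 <= S (x + x') k.
  have := rev_tri _ _ (fun j => pool j == k) (fun j => dotv x (F j)) (fun j => - dotv x' (F j)).
  have -> : \sum_(j | pool j == k) (- dotv x' (F j)) ^+ 2 = S x' k.
    by apply: eq_bigr => j _; rewrite sqrrN.
  have -> : \sum_(j | pool j == k) (dotv x (F j) - - dotv x' (F j)) ^+ 2 = S (x + x') k.
    by apply: eq_bigr => j _; rewrite dotvDl opprK.
  by [].
rewrite /dist_pm minEle; case: ifP => _; [exact: up hminus | exact: up hplus].
Qed.
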